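(* Let $(r_{i,j})_{i\ge 0,\, j\in\mathbb{Z}}$ be the Pascal rhombus, defined by $r_{0,0}=r_{1,-1}=r_{1,0}=r_{1,1}=1$, $r_{0,j}=0$ for $j\neq 0$, $r_{1,j}=0$ for $j\notin\{-1,0,1\}$, and $r_{i,j}=r_{i-1,j-1}+r_{i-1,j}+r_{i-1,j+1}+r_{i-2,j}$ for $i\ge 2$, $j\in\mathbb{Z}$. Then for all integers $i\ge 0$ and $j\ge 0$, $$r_{i,j}=\sum_{m=0}^{\lfloor (i-j)/2\rfloor}\binom{2m+j}{m}F^{(j+2m+1)}_{i-j-2m+1},$$ where $F^{(r)}_{k}$ are the convolved Fibonacci numbers.
   Context: For a positive integer $r$, the convolved Fibonacci numbers $F^{(r)}_{k}$ ($k\ge 1$) are defined by $(1-x-x^2)^{-r}=\sum_{k\ge 0}F^{(r)}_{k+1}x^k$. An empty sum (upper limit negative) equals $0$. *)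

(* Defs.v *)
From mathcomp Require Import all_boot all_order all_algebra.
Set Implicit Arguments. Unset Strict Implicit. Unset Printing Implicit Defensive.
Import GRing.Theory Num.Theory.
Local Open Scope ring_scope.

Fixpoint rhombus (i : nat) (j : int) : int :=
  match i with
  | 0%N => (j == 0)%:R
  | 1%N => ((j == -1) || (j == 0) || (j == 1))%:R
  | S ((S i'') as i') =>
      rhombus i' (j - 1) + rhombus i' j + rhombus i' (j + 1) + rhombus i'' j
  end.

(* Formal power series inverse of a series c with c 0 = 1:
   inv_pref c n = first n coefficients a_0..a_{n-1} of 1/(sum c_i x^i),
   determined by  sum_{i<=k} c_i a_{k-i} = [k == 0]. *)
Fixpoint inv_pref (c : nat -> int) (n : nat) : seq int :=
  match n with
  | 0%N => [::]
  | S n' => let s := inv_pref c n' in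
      rcons s ((n' == 0%N)%:R - \sum_(1 <= i < n'.+1) c i * nth 0 s (n' - i))
  end.

Definition inv_coef (c : nat -> int) (k : nat) : int := nth 0 (inv_pref c k.+1) k.

(* Convolved Fibonacci numbers:
   (1 - x - x^2)^(-r) = sum_{k>=0} convF r (k+1) x^k. *)
Definition convF (r k : nat) : int :=
  inv_coef (fun i => ((1 - 'X - 'X^2 : {poly int}) ^+ r)`_i) k.-1.

(* Main.v *)
Require Import Defs.
From mathcomp Require Import all_boot all_order all_algebra zify ring.
Import GRing.Theory Num.Theory.
Local Open Scope ring_scope.

Lemma size_inv_pref c n : size (inv_pref c n) = n.
Proof. by elim: n => //= n IH; rewrite size_rcons IH. Qed.

Lemma nth_inv_pref c n k : (k < n)%N -> nth 0 (inv_pref c n) k = inv_coef c k.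
Proof.
elim: n => // n IH; rewrite ltnS leq_eqVlt => /orP[/eqP->|lt] //.
by rewrite /= nth_rcons size_inv_pref lt IH.
Qed.

Lemma inv_coefE c k : inv_coef c k =
  (k == 0%N)%:R - \sum_(1 <= i < k.+1) c i * inv_coef c (k - i).
Proof.
rewrite /inv_coef /= nth_rcons size_inv_pref ltnn eqxx; congr (_ - _).
apply: eq_big_nat => i /andP[i1 ik]; rewrite nth_inv_pref //; lia.
Qed.

Lemma inv_coef_spec c k : c 0%N = 1 ->
  \sum_(i < k.+1) c i * inv_coef c (k - i) = (k == 0%N)%:R.
Proof.
move=> c0; rewrite big_ord_recl /= c0 mul1r subn0 [inv_coef c k]inv_coefE.
rewrite big_add1 /= big_mkord.
exact: subrK.
Qed.

Lemma inv_coef_uniq c b K : c 0%N = 1 ->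
  (forall k, (k <= K)%N -> \sum_(i < k.+1) c i * b (k - i)%N = (k == 0%N)%:R) ->
  forall k, (k <= K)%N -> b k = inv_coef c k.
Proof.
move=> c0 Hb; elim/ltn_ind => k IH kK.
have := Hb k kK; rewrite -(@inv_coef_spec c k c0) !big_ord_recl /= c0 !mul1r !subn0.
have -> : \sum_(i < k) c (bump 0 i) * b (k - bump 0 i)%N =
          \sum_(i < k) c (bump 0 i) * inv_coef c (k - bump 0 i)%N.
  apply: eq_bigr => i _; have := ltn_ord i; rewrite /bump /= => ?; rewrite IH //; lia.
by move/addIr.
Qed.

Definition D : {poly int} := 1 - 'X - 'X^2.
Definition cf r i := (D ^+ r)`_i.
Definition f r k := inv_coef (cf r) k.

Lemma cf0 r : cf r 0%N = 1.
Proof.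
rewrite /cf; elim: r => [|r IH]; first by rewrite expr0 coefC.
by rewrite exprS coef0M IH mulr1 /D !coefE.
Qed.

Lemma f0k k : f 0 k = (k == 0%N)%:R.
Proof.
symmetry; apply: (@inv_coef_uniq (cf 0) (fun k => (k == 0%N)%:R) k) => // [|k' _]; first exact: cf0.
rewrite big_ord_recl /cf expr0 coefC /= mul1r subn0 big1 ?addr0 // => i _.
by rewrite coefC /= mul0r.
Qed.

Lemma f_rec n k : f n k = f n.+1 k - (if k is k'.+1 then f n.+1 k' else 0)
   - (if k is k'.+2 then f n.+1 k' else 0).
Proof.
set g := fun k => f n.+1 k - (if k is k'.+1 then f n.+1 k' else 0)
   - (if k is k'.+2 then f n.+1 k' else 0).
rewrite -/(g k); symmetry; apply: (@inv_coef_uniq (cf n) g k) => // [|k' kk']; first exact: cf0.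
set Fp := \poly_(i < k.+1) f n.+1 i.
have Eg : forall m, (m <= k)%N -> g m = (D * Fp)`_m.
  move=> m mk; rewrite /D !mulrBl mul1r !coefE.
  case: m mk => [|[|m]] mk /=; rewrite /g ?ltnS ?mk /=.
  - by rewrite !subr0.
  - by [].
  - rewrite subn2 /= !ifT //; lia.
transitivity (\sum_(i < k'.+1) cf n i * (D * Fp)`_(k' - i)).
  apply: eq_bigr => i _; rewrite Eg //; have := ltn_ord i; lia.
rewrite -coefM mulrA -exprSr coefM.
rewrite -(@inv_coef_spec (cf n.+1) k' (cf0 _)).
apply: eq_bigr => i _; rewrite coef_poly; have := ltn_ord i => ?.
rewrite ifT //; lia.
Qed.

Definition fz r (k : int) : int := match k with Posz k => f r k | Negz _ => 0 end.

Lemma fz_neg r k : k < 0 -> fz r k = 0.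
Proof. by case: k. Qed.

Lemma f0 r : f r 0%N = 1.
Proof. by rewrite /f inv_coefE big_geq // subr0. Qed.

Lemma fz_rec n k : fz n.+1 k = fz n k + fz n.+1 (k - 1) + fz n.+1 (k - 2).
Proof.
case: k => [m|m]; last by rewrite !fz_neg //; lia.
case: m => [|[|m]].
- rewrite (@fz_neg _ (0-1)) // (@fz_neg _ (0-2)) //= f0 f0; lia.
- rewrite (@fz_neg _ (1 - 2)) // (_ : Posz 1 - 1 = Posz 0) // /fz (f_rec n 1) /=; ring.
- rewrite (_ : Posz m.+2 - 1 = Posz m.+1); last by rewrite -addn1 PoszD addrK.
  rewrite (_ : Posz m.+2 - 2 = Posz m); last by rewrite -addn2 PoszD addrK.
  by rewrite /fz (f_rec n m.+2) /=; ring.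
Qed.

Lemma beqE (P Q : bool) : (P <-> Q) -> P = Q.
Proof. by move=> h; apply/idP/idP => /h. Qed.

Definition A n (j : int) : int :=
  \sum_(k < n.+1) (n%:Z == (2 * k)%:Z + j)%:R * ('C(n, k))%:R.

Lemma A0 j : A 0 j = (j == 0)%:R.
Proof.
rewrite /A big_ord1 /= bin0 mulr1; congr (nat_of_bool _)%:R; apply: beqE.
by split => /eqP ?; apply/eqP; lia.
Qed.

Lemma A_rec n j : A n.+1 j = A n (j - 1) + A n (j + 1).
Proof.
have L : A n.+1 j = (n.+1%:Z == j)%:R + \sum_(k < n.+1)
   (n.+1%:Z == (2 * k.+1)%:Z + j)%:R * ('C(n, k.+1) + 'C(n, k))%:R.
  by rewrite /A big_ord_recl /= muln0 add0r bin0 mulr1.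
have R1 : A n (j - 1) = (n%:Z == j - 1)%:R + \sum_(k < n)
   (n%:Z == (2 * k.+1)%:Z + (j - 1))%:R * ('C(n, k.+1))%:R.
  by rewrite /A big_ord_recl /= muln0 add0r bin0 mulr1.
have R2 : A n (j + 1) = \sum_(k < n.+1)
   (n.+1%:Z == (2 * k.+1)%:Z + j)%:R * ('C(n, k))%:R.
  rewrite /A; apply: eq_bigr => k _; congr ((nat_of_bool _)%:R * _); apply: beqE.
  by split => /eqP ?; apply/eqP; lia.
rewrite L R1 R2; under eq_bigr do rewrite natrD mulrDr.
rewrite big_split /= addrA; congr (_ + _).
rewrite big_ord_recr /= bin_small // mulr0 addr0; congr (_ + _).
  congr (nat_of_bool _)%:R; apply: beqE; by split => /eqP ?; apply/eqP; lia.
apply: eq_bigr => k _; congr ((nat_of_bool _)%:R * _); apply: beqE.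
by split => /eqP ?; apply/eqP; lia.
Qed.

Definition S i j N := \sum_(n < N) A n j * fz n.+1 (i%:Z - n%:Z).

Lemma sum_cut (g : nat -> int) N0 N : (N0 <= N)%N ->
  (forall m, (N0 <= m)%N -> (m < N)%N -> g m = 0) ->
  \sum_(m < N) g m = \sum_(m < N0) g m.
Proof.
elim: N => [|N IH] le H; first by move: le; rewrite leqn0 => /eqP->.
move: le; rewrite leq_eqVlt => /orP[/eqP->//|le].
rewrite big_ord_recr /= H // addr0 IH // => m h1 h2; apply: H => //; lia.
Qed.

Lemma S_ext i j N : (i < N)%N -> S i j N = S i j i.+1.
Proof.
move=> lt; apply: (@sum_cut (fun n => A n j * fz n.+1 (i%:Z - n%:Z))) => // m h1 h2.
by rewrite fz_neg ?mulr0 //; lia.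
Qed.

Lemma rhombusSS p j : rhombus p.+2 j =
  rhombus p.+1 (j - 1) + rhombus p.+1 j + rhombus p.+1 (j + 1) + rhombus p j.
Proof. by []. Qed.

Lemma f11 : f 1 1 = 1.
Proof. have := f_rec 0 1; rewrite f0k f0 /=; lia. Qed.

Lemma main i : forall j, rhombus i j = S i j i.+1.
Proof.
elim/ltn_ind: i => -[|[|p]] IH j.
- by rewrite /S big_ord1 /= A0 addn0 f0 mulr1.
- rewrite /S !big_ord_recr big_ord0 /= A_rec !A0 add0r.
  rewrite addn0 subnn f11 f0 !mulr1 subr_eq0 addr_eq0.
  have [e|h0] := eqVneq j (0:int); first by subst j.
  have [e|h1] := eqVneq j (1:int); first by subst j.
  have [e|h2] := eqVneq j (-1:int); first by subst j.
  by case: j h0 h1 h2 => [[|[|m]]|[|m]].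
- rewrite rhombusSS !IH // -!(@S_ext p.+1 _ p.+3) // -(@S_ext p _ p.+3) //; last lia.
  have X : S p.+2 j p.+3 = \sum_(n < p.+3) A n j * fz n (p.+2%:Z - n%:Z)
             + S p.+1 j p.+3 + S p j p.+3.
    rewrite /S -!big_split /=; apply: eq_bigr => n _.
    rewrite fz_rec -!mulrDr; congr (_ * (_ + fz _ _ + fz _ _)); lia.
  have Y : \sum_(n < p.+3) A n j * fz n (p.+2%:Z - n%:Z) = S p.+1 (j - 1) p.+3 + S p.+1 (j + 1) p.+3.
    rewrite /S -big_split /= big_ord_recl /= addn0 f0k /= mulr0n mulr0 add0r.
    rewrite [RHS]big_ord_recr /= (@fz_neg _ (p.+1%:Z - p.+2%:Z)) ?mulr0 ?addr0; last by lia.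
    apply: eq_bigr => n _; rewrite -mulrDl -A_rec /bump /= add1n; congr (_ * fz _ _); lia.
  rewrite X Y; ring.
Qed.

Lemma ind0 (a b c : int) : a <> b -> (a == b)%:R * c = 0.
Proof. by move/eqP/negbTE => ->; rewrite mul0r. Qed.
Lemma ind1 (a b c : int) : a = b -> (a == b)%:R * c = c.
Proof. by move=> ->; rewrite eqxx mul1r. Qed.

Lemma A_lt n (j : nat) : (n < j)%N -> A n j = 0.
Proof. by move=> lt; rewrite /A big1 // => k _; rewrite ind0 //; lia. Qed.

Lemma A_odd (j m : nat) : A (j + 2 * m).+1 j = 0.
Proof. by rewrite /A big1 // => k _; rewrite ind0 //; lia. Qed.

Lemma A_even (j m : nat) : A (j + 2 * m) j = ('C(j + 2 * m, m))%:R.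
Proof.
have mlt : (m < (j + 2 * m).+1)%N by lia.
rewrite /A (bigD1 (Ordinal mlt)) //= big1 ?addr0.
  by rewrite ind1 //; lia.
move=> k kne; rewrite ind0 // => h; move/eqP: kne; apply; apply: val_inj => /=; lia.
Qed.
Lemma Ssum (j i M : nat) :
  \sum_(n < j + 2 * M) A n j * fz n.+1 (i%:Z - n%:Z) =
  \sum_(m < M) ('C(j + 2 * m, m))%:R * fz (j + 2 * m).+1 (i%:Z - (j + 2 * m)%:Z).
Proof.
elim: M => [|M IH].
  by rewrite big_ord0 muln0 addn0 big1 // => n _; rewrite A_lt ?mul0r.
rewrite (_ : j + 2 * M.+1 = (j + 2 * M).+2)%N; last by lia.
by rewrite !big_ord_recr /= A_odd mul0r addr0 IH A_even.
Qed.

Theorem corollary2p5 (i j : nat) :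
  rhombus i j%:Z =
  \sum_(m < (if (j <= i)%N then ((i - j)./2).+1 else 0%N))
     ('C(2 * m + j, m))%:R * convF (j + 2 * m + 1) (i - j - 2 * m + 1).
Proof.
rewrite main -(@S_ext i j (j + 2 * i.+1)); last by lia.
rewrite /S Ssum.
have H2 := odd_double_half (i - j); have Hb := leq_b1 (odd (i - j)).
rewrite -muln2 in H2.
set M0 := (if (j <= i)%N then ((i - j)./2).+1 else 0%N).
have HM0 : forall m, (m < M0)%N <-> (j + 2 * m <= i)%N.
  move=> m; rewrite /M0; case: ifP => ji; lia.
rewrite (@sum_cut (fun m => ('C(j + 2 * m, m))%:R * fz (j + 2 * m).+1 (i%:Z - (j + 2 * m)%:Z)) M0); first last.
- move=> m h1 h2; rewrite fz_neg ?mulr0 //.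
  have : ~ (m < M0)%N by lia.
  rewrite HM0; lia.
- rewrite /M0; case: ifP => ji; lia.
apply: eq_bigr => m _; have := ltn_ord m; rewrite HM0 => le.
rewrite addnC subzn //=; last by lia.
by rewrite /convF [(2 * m + j + 1)%N]addn1 [(i - j - 2 * m + 1)%N]addn1 -subnDA (addnC j).
Qed.
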